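(* Let $X$ be any one of the sequences $F,L,J,j,P,Q$. Then for all integers $a,b,c,d,e,m$, $$(X_{d-a}X_{e-b}-X_{e-a}X_{d-b})X_{m-c}=(X_{d-c}X_{e-b}-X_{e-c}X_{d-b})X_{m-a}+(X_{d-a}X_{e-c}-X_{e-a}X_{d-c})X_{m-b}.$$
   Context: All sequences are indexed by $n\in\mathbb Z$. Fibonacci numbers $F_n$ and Lucas numbers $L_n$: $F_n=F_{n-1}+F_{n-2}$, $L_n=L_{n-1}+L_{n-2}$ for all $n\in\mathbb Z$, with $F_0=0,F_1=1,L_0=2,L_1=1$ (so $F_{-n}=(-1)^{n-1}F_n$, $L_{-n}=(-1)^nL_n$). Jacobsthal numbers $J_n$ and Jacobsthal–Lucas numbers $j_n$: $J_n=J_{n-1}+2J_{n-2}$, $j_n=j_{n-1}+2j_{n-2}$ for all $n\in\mathbb Z$, with $J_0=0,J_1=1,j_0=2,j_1=1$ (so $J_{-n}=(-1)^{n-1}2^{-n}J_n$, $j_{-n}=(-1)^n2^{-n}j_n$, rational for negative index). Pell numbers $P_n$ and Pell–Lucas numbers $Q_n$: $P_n=2P_{n-1}+P_{n-2}$, $Q_n=2Q_{n-1}+Q_{n-2}$ for all $n\in\mathbb Z$, with $P_0=0,P_1=1,Q_0=2,Q_1=2$ (so $P_{-n}=(-1)^{n-1}P_n$, $Q_{-n}=(-1)^nQ_n$). *)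

(* Defs.v *)
From Stdlib Require Import Reals ZArith Lra Lia.
Open Scope R_scope.

(* Second-order sequence W_n = p W_{n-1} + q W_{n-2} (q <> 0), W_0 = a, W_1 = b,
   extended to all n in Z by running the recurrence backwards:
   W_{n-2} = (W_n - p W_{n-1}) / q. *)
Fixpoint lrs_fwd (p q a b : R) (n : nat) : R * R :=
  match n with
  | O => (a, b)
  | S k => let (x, y) := lrs_fwd p q a b k in (y, p * y + q * x)
  end.
(* lrs_fwd n = (W_n, W_{n+1}) *)

Fixpoint lrs_bwd (p q a b : R) (n : nat) : R * R :=
  match n with
  | O => (a, b)
  | S k => let (x, y) := lrs_bwd p q a b k in ((y - p * x) / q, x)
  end.
(* lrs_bwd n = (W_{-n}, W_{-n+1}) *)

Definition lrs (p q a b : R) (n : Z) : R :=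
  if (0 <=? n)%Z then fst (lrs_fwd p q a b (Z.to_nat n))
  else fst (lrs_bwd p q a b (Z.to_nat (- n))).

Definition Fib : Z -> R := lrs 1 1 0 1.
Definition Luc : Z -> R := lrs 1 1 2 1.
Definition Jac : Z -> R := lrs 1 2 0 1.
Definition JacL : Z -> R := lrs 1 2 2 1.
Definition Pell : Z -> R := lrs 2 1 0 1.
Definition PellL : Z -> R := lrs 2 1 2 2.

(* Main.v *)
Require Import Defs.
From Stdlib Require Import Reals ZArith Lra Lia.
Open Scope R_scope.

Section S.
Variables p q a0 b0 : R.
Hypothesis hq : q <> 0.

Lemma fwd_fst_S n : fst (lrs_fwd p q a0 b0 (S n)) = snd (lrs_fwd p q a0 b0 n).
Proof. simpl; destruct (lrs_fwd p q a0 b0 n); reflexivity. Qed.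
Lemma fwd_snd_S n : snd (lrs_fwd p q a0 b0 (S n)) =
  p * snd (lrs_fwd p q a0 b0 n) + q * fst (lrs_fwd p q a0 b0 n).
Proof. simpl; destruct (lrs_fwd p q a0 b0 n); reflexivity. Qed.
Lemma bwd_fst_S n : fst (lrs_bwd p q a0 b0 (S n)) =
  (snd (lrs_bwd p q a0 b0 n) - p * fst (lrs_bwd p q a0 b0 n)) / q.
Proof. simpl; destruct (lrs_bwd p q a0 b0 n); reflexivity. Qed.
Lemma bwd_snd_S n : snd (lrs_bwd p q a0 b0 (S n)) = fst (lrs_bwd p q a0 b0 n).
Proof. simpl; destruct (lrs_bwd p q a0 b0 n); reflexivity. Qed.

Lemma lrs_pos k : lrs p q a0 b0 (Z.of_nat k) = fst (lrs_fwd p q a0 b0 k).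
Proof.
  unfold lrs. replace (0 <=? Z.of_nat k)%Z with true by (symmetry; apply Z.leb_le; lia).
  now rewrite Nat2Z.id.
Qed.
Lemma lrs_neg k : lrs p q a0 b0 (- Z.of_nat (S k)) = fst (lrs_bwd p q a0 b0 (S k)).
Proof.
  unfold lrs. replace (0 <=? - Z.of_nat (S k))%Z with false by (symmetry; apply Z.leb_gt; lia).
  now rewrite Z.opp_involutive, Nat2Z.id.
Qed.

Lemma lrs_rec n : lrs p q a0 b0 (n + 2) = p * lrs p q a0 b0 (n + 1) + q * lrs p q a0 b0 n.
Proof.
  destruct (Z_le_gt_dec 0 n) as [H|H].
  - destruct (Z_of_nat_complete n H) as [k ->].
    replace (Z.of_nat k + 2)%Z with (Z.of_nat (S (S k))) by lia.
    replace (Z.of_nat k + 1)%Z with (Z.of_nat (S k)) by lia.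
    rewrite !lrs_pos, (fwd_fst_S (S k)), fwd_snd_S, fwd_fst_S. ring.
  - destruct (Z.eq_dec n (-1)) as [->|H1].
    + replace (-1 + 2)%Z with (Z.of_nat 1) by lia.
      replace (-1 + 1)%Z with (Z.of_nat 0) by lia.
      replace (-1)%Z with (- Z.of_nat 1)%Z by lia.
      rewrite !lrs_pos, lrs_neg, bwd_fst_S. simpl. field. exact hq.
    + assert (exists k, n = (- Z.of_nat (S (S k)))%Z) as [k ->].
      { exists (Z.to_nat (- n - 2)). lia. }
      replace (- Z.of_nat (S (S k)) + 1)%Z with (- Z.of_nat (S k))%Z by lia.
      replace (- Z.of_nat (S (S k)) + 2)%Z with (- Z.of_nat k)%Z by lia.
      rewrite !lrs_neg, (bwd_fst_S (S k)), bwd_snd_S.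
      destruct k as [|k].
      * simpl (- Z.of_nat 0)%Z. change 0%Z with (Z.of_nat 0). rewrite lrs_pos. simpl. field. exact hq.
      * rewrite lrs_neg. field. exact hq.
Qed.
End S.

Lemma two_dim (W G H : Z -> R) (p q : R) (hq : q <> 0)
  (hW : forall n, W (n + 2)%Z = p * W (n + 1)%Z + q * W n)
  (hG : forall n, G (n + 2)%Z = p * G (n + 1)%Z + q * G n)
  (hH : forall n, H (n + 2)%Z = p * H (n + 1)%Z + q * H n)
  (G0 : G 0%Z = 1) (G1 : G 1%Z = 0) (H0 : H 0%Z = 0) (H1 : H 1%Z = 1) :
  forall k s, W (k + s)%Z = G k * W s + H k * W (s + 1)%Z.
Proof.
  intros k s.
  assert (Q : forall k, W (k + s)%Z = G k * W s + H k * W (s + 1)%Z /\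
                        W (k + 1 + s)%Z = G (k+1)%Z * W s + H (k+1)%Z * W (s + 1)%Z).
  { intro j. induction j using Z.peano_ind.
    - split; [rewrite G0, H0; simpl; ring|]. replace (0+1+s)%Z with (s+1)%Z by lia. replace (0+1)%Z with 1%Z by lia. rewrite G1, H1; ring.
    - destruct IHj as [A B]. split.
      + replace (Z.succ j + s)%Z with (j + 1 + s)%Z by lia.
        replace (Z.succ j) with (j + 1)%Z by lia. exact B.
      + replace (Z.succ j + 1 + s)%Z with ((j + s) + 2)%Z by lia.
        replace (Z.succ j + 1)%Z with (j + 2)%Z by lia.
        rewrite hW, hG, hH.
        replace (j + s + 1)%Z with (j + 1 + s)%Z by lia. rewrite A, B. ring.
    - destruct IHj as [A B]. split.
      + assert (E : W (Z.pred j + s + 2)%Z = p * W (Z.pred j + s + 1)%Z + q * W (Z.pred j + s)%Z) by apply hW.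
        assert (EG := hG (Z.pred j)). assert (EH := hH (Z.pred j)).
        replace (Z.pred j + 2)%Z with (j + 1)%Z in EG, EH by lia.
        replace (Z.pred j + 1)%Z with j in EG, EH by lia.
        replace (Z.pred j + s + 2)%Z with (j + 1 + s)%Z in E by lia.
        replace (Z.pred j + s + 1)%Z with (j + s)%Z in E by lia.
        rewrite A, B, EG, EH in E.
        apply (Rmult_eq_reg_l q); [|exact hq]. lra.
      + replace (Z.pred j + 1 + s)%Z with (j + s)%Z by lia.
        replace (Z.pred j + 1)%Z with j by lia. exact A. }
  apply Q.
Qed.

Lemma main_gen (X : Z -> R) p q (hq : q <> 0)
  (hX : forall n, X (n + 2)%Z = p * X (n + 1)%Z + q * X n)
  (a b c d e m : Z) :
  (X (d - a)%Z * X (e - b)%Z - X (e - a)%Z * X (d - b)%Z) * X (m - c)%Z =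
  (X (d - c)%Z * X (e - b)%Z - X (e - c)%Z * X (d - b)%Z) * X (m - a)%Z +
  (X (d - a)%Z * X (e - c)%Z - X (e - a)%Z * X (d - c)%Z) * X (m - b)%Z.
Proof.
  set (G := lrs p q 1 0). set (H := lrs p q 0 1).
  assert (T := two_dim X G H p q hq hX (lrs_rec p q 1 0 hq) (lrs_rec p q 0 1 hq)
     eq_refl eq_refl eq_refl eq_refl).
  assert (R1 : forall k t, X (k - t)%Z = G k * X (- t)%Z + H k * X (- t + 1)%Z).
  { intros k t. rewrite <- T. f_equal; lia. }
  rewrite !R1. ring.
Qed.

Theorem theorem2 (X : Z -> R)
  (hX : X = Fib \/ X = Luc \/ X = Jac \/ X = JacL \/ X = Pell \/ X = PellL)
  (a b c d e m : Z) :
  (X (d - a)%Z * X (e - b)%Z - X (e - a)%Z * X (d - b)%Z) * X (m - c)%Z =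
  (X (d - c)%Z * X (e - b)%Z - X (e - c)%Z * X (d - b)%Z) * X (m - a)%Z +
  (X (d - a)%Z * X (e - c)%Z - X (e - a)%Z * X (d - c)%Z) * X (m - b)%Z.
Proof.
  destruct hX as [H|[H|[H|[H|[H|H]]]]]; subst X;
  (eapply main_gen; [| apply lrs_rec]); try lra.
Qed.
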